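(* Let $\Psi=(\psi_t)$ be a continuous expansive flow on a compact metric space $X$. Then every $\Psi\times\Psi$-invariant Borel probability measure $\nu$ on $X\times X$ is product expansive, i.e. there is $\epsilon>0$ with $\nu(NE^\times(\epsilon))=0$.
   Context: For $x\in X$ and $\epsilon>0$, $\Gamma_\epsilon(x)=\{y\in X: d(\psi_t x,\psi_t y)<\epsilon\ \forall t\in\mathbb R\}$; on $X\times X$ (with the max metric) and the product flow $\psi_t\times\psi_t$, $\Gamma_\epsilon(x,y)$ is defined analogously. $NE(\epsilon)=\{x: \Gamma_\epsilon(x)\not\subset\psi_{[-s,s]}(x)\ \text{for every } s>0\}$ and $NE^\times(\epsilon)=\{(x,y):\Gamma_\epsilon(x,y)\not\subset\psi_{[-s,s]}(x)\times\psi_{[-s,s]}(y)\ \text{for every } s>0\}$. The flow is expansive in the sense that $NE(\epsilon)=\emptyset$ for some $\epsilon>0$ (Bowen–Walters expansivity). *)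

(* Defs.v *)
From HB Require Import structures.
From mathcomp Require Import all_boot all_order all_algebra.
From mathcomp Require Import all_classical all_reals all_analysis.
Set Implicit Arguments. Unset Strict Implicit. Unset Printing Implicit Defensive.
Import Order.TTheory GRing.Theory Num.Theory numFieldTopology.Exports.
Local Open Scope classical_set_scope.
Local Open Scope ring_scope.

(* Nonempty (pointed) metric spaces; the point is only needed so that the
   Borel sigma-algebra can be packaged as a mathcomp measurableType. *)
#[short(type="pointedMetricType")]
HB.structure Definition PointedMetric (K : numDomainType) :=
  { M of Pointed M & Metric K M }.

Section Flows.
Context {R : realType} {X : pointedMetricType R}.

Definition is_continuous_flow (psi : R -> X -> X) : Prop :=
  (forall x, psi 0 x = x) /\
  (forall s t x, psi (s + t) x = psi s (psi t x)) /\
  continuous (fun p : R * X => psi p.1 p.2).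

Definition orbit_seg (psi : R -> X -> X) (s : R) (x : X) : set X :=
  [set psi u x | u in [set u : R | - s <= u <= s]].

Definition Gamma (psi : R -> X -> X) (eps : R) (x : X) : set X :=
  [set y | forall t : R, mdist (psi t x) (psi t y) < eps].

Definition NE (psi : R -> X -> X) (eps : R) : set X :=
  [set x | forall s : R, 0 < s -> ~ (Gamma psi eps x `<=` orbit_seg psi s x)].

Definition expansive_flow (psi : R -> X -> X) : Prop :=
  exists2 eps : R, 0 < eps & NE psi eps = set0.

Definition Gamma2 (psi : R -> X -> X) (eps : R) (p : X * X) : set (X * X) :=
  [set q | forall t : R,
     Num.max (mdist (psi t p.1) (psi t q.1)) (mdist (psi t p.2) (psi t q.2)) < eps].

Definition NEx (psi : R -> X -> X) (eps : R) : set (X * X) :=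
  [set p | forall s : R, 0 < s ->
     ~ (Gamma2 psi eps p `<=` orbit_seg psi s p.1 `*` orbit_seg psi s p.2)].

End Flows.

(* Borel sigma-algebra of X x X (product topology = max-metric topology). *)
Definition BorelXX {R : realType} (X : pointedMetricType R) :=
  g_sigma_algebraType (@open (X * X)%type).

(* Main.v *)
Require Import Defs.
From HB Require Import structures.
From mathcomp Require Import all_boot all_order all_algebra.
From mathcomp Require Import all_classical all_reals all_analysis.
Import Order.TTheory GRing.Theory Num.Theory numFieldTopology.Exports.
Local Open Scope classical_set_scope.
Local Open Scope ring_scope.

Lemma exp_seg (R : realType) (X : pointedMetricType R) (psi : R -> X -> X) eps x :
  NE psi eps = set0 -> exists2 s : R, 0 < s & Gamma psi eps x `<=` orbit_seg psi s x.
Proof.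
move=> h; apply: contrapT => hn.
have : NE psi eps x.
  move=> s s0 hs; apply: hn; by exists s.
by rewrite h.
Qed.

Lemma seg_mono (R : realType) (X : pointedMetricType R) (psi : R -> X -> X) s s' x :
  s <= s' -> orbit_seg psi s x `<=` orbit_seg psi s' x.
Proof.
move=> hs y [u /andP[h1 h2] <-]; exists u => //; apply/andP; split.
- by rewrite (le_trans _ h1) // lerN2.
- exact: le_trans h2 hs.
Qed.

Theorem mainTheorem10 (R : realType) (X : pointedMetricType R)
  (psi : R -> X -> X) :
  compact [set: X] ->
  is_continuous_flow psi ->
  expansive_flow psi ->
  forall nu : probability (BorelXX X) R,
    (forall (t : R) (A : set (BorelXX X)), measurable A ->
       nu ((fun p : BorelXX X => ((psi t p.1, psi t p.2) : BorelXX X)) @^-1` A)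
       = nu A) ->
    exists2 eps : R, 0 < eps & nu (NEx psi eps) = 0%E.
Proof.
move=> _ _ [eps eps0 hNE] nu _; exists eps => //.
suff -> : NEx psi eps = set0 by rewrite measure0.
apply/seteqP; split => // [[x y]] /= hp.
have [s1 s10 h1] := @exp_seg R X psi eps x hNE.
have [s2 s20 h2] := @exp_seg R X psi eps y hNE.
apply: (hp (Num.max s1 s2)); first by rewrite lt_max s10.
move=> [a b] /= hq; split => /=.
- apply: (@seg_mono R X psi s1); first by rewrite le_max lexx. apply: h1 => t.
  by have := hq t; rewrite gt_max => /andP[].
- apply: (@seg_mono R X psi s2); first by rewrite le_max lexx orbT. apply: h2 => t.
  by have := hq t; rewrite gt_max => /andP[].
Qed.
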